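(* Let $(S,\mathscr{S})$ be a measurable space, $n\le N$, and $X=(X_1,\ldots,X_n)$ an exchangeable random element of $S^n$. If $X$ is $N$-extendible, then $\|\mathcal E^N_n\|=1$, where \[ \|\mathcal E^N_n\|:=\sup\Big\{|\mathbb{E}\,g(X_1,\ldots,X_n)|: g:S^n\to\mathbb{R}\text{ bounded measurable},\ |U^N_ng(x)|\le1\ \forall x\in S^N\Big\}. \]
   Context: $X$ is exchangeable if its law is invariant under all permutations of coordinates; $X$ is $N$-extendible if there is an exchangeable random element $(Y_1,\ldots,Y_N)$ of $S^N$ with $(Y_1,\ldots,Y_n)$ equal in distribution to $X$. With $\mathfrak S[n,N]$ the set of injections $\{1,\ldots,n\}\to\{1,\ldots,N\}$ and $(N)_n=N(N-1)\cdots(N-n+1)$, $U^N_ng(x_1,\ldots,x_N)=\frac1{(N)_n}\sum_{\sigma\in\mathfrak S[n,N]}g(x_{\sigma(1)},\ldots,x_{\sigma(n)})$. *)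

(* Defs.v *)
From HB Require Import structures.
From mathcomp Require Import all_boot all_order all_algebra all_fingroup.
From mathcomp Require Import all_classical all_reals all_analysis.

Set Implicit Arguments.
Unset Strict Implicit.
Unset Printing Implicit Defensive.

Import Order.TTheory GRing.Theory Num.Theory.
Local Open Scope classical_set_scope.
Local Open Scope ring_scope.

(* S^n is modelled as n.-tuple S, with MathComp-Analysis' product sigma-algebra
   (generated by the coordinate projections). *)

Definition tperm_coord {S : Type} (n : nat) (s : 'S_n) (x : n.-tuple S)
  : n.-tuple S := [tuple tnth x (s i) | i < n].

Definition tfirst {S : Type} (n N : nat) (hnN : (n <= N)%N) (y : N.-tuple S)
  : n.-tuple S := [tuple tnth y (widen_ord hnN i) | i < n].

Definition exchangeable {d dS} {Omega : measurableType d} {R : realType}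
  {S : measurableType dS} (n : nat) (P : probability Omega R)
  (X : Omega -> n.-tuple S) : Prop :=
  forall (s : 'S_n) (A : set (n.-tuple S)), measurable A ->
    P ((fun w => tperm_coord s (X w)) @^-1` A) = P (X @^-1` A).

Definition extendible {d dS} {Omega : measurableType d} {R : realType}
  {S : measurableType dS} (n N : nat) (hnN : (n <= N)%N)
  (P : probability Omega R) (X : Omega -> n.-tuple S) : Prop :=
  exists (d' : measure_display) (Omega' : measurableType d')
         (Q : probability Omega' R) (Y : Omega' -> N.-tuple S),
    measurable_fun setT Y /\ exchangeable Q Y /\
    forall A : set (n.-tuple S), measurable A ->
      Q ((fun w => tfirst hnN (Y w)) @^-1` A) = P (X @^-1` A).

Definition U_op {S : Type} {R : realType} (n N : nat)
  (g : n.-tuple S -> R) (x : N.-tuple S) : R :=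
  (\sum_(sg : {ffun 'I_n -> 'I_N} | injectiveb sg)
      g [tuple tnth x (sg i) | i < n]) / (N ^_ n)%:R.

Definition E_norm {d dS} {Omega : measurableType d} {R : realType}
  {S : measurableType dS} (n N : nat) (P : probability Omega R)
  (X : Omega -> n.-tuple S) : \bar R :=
  ereal_sup [set `| \int[P]_w (g (X w))%:E |%E | g in
    [set g : n.-tuple S -> R |
      measurable_fun setT g /\ (exists M : R, forall x, `|g x| <= M) /\
      (forall x : N.-tuple S, `|U_op g x| <= 1)]].

(* Main.v *)
Require Import Defs.
From HB Require Import structures.
From mathcomp Require Import all_boot all_order all_algebra all_fingroup.
From mathcomp Require Import all_classical all_reals all_analysis.
From mathcomp Require Import measurable_realfun.
Set Implicit Arguments. Unset Strict Implicit. Unset Printing Implicit Defensive.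
Import Order.TTheory GRing.Theory Num.Theory.
Local Open Scope classical_set_scope.
Local Open Scope ring_scope.
Lemma ext_perm n N (hnN : (n <= N)%N) (sg : 'I_n -> 'I_N) : injective sg ->
  exists s : 'S_N, forall i, s (widen_ord hnN i) = sg i.
Proof.
move=> sginj.
set C := [seq j <- enum 'I_N | j \notin codom sg].
set s := map sg (enum 'I_n) ++ C.
have us : uniq s.
  rewrite cat_uniq map_inj_uniq // enum_uniq filter_uniq ?enum_uniq // andbT /=.
  apply/hasPn => j; rewrite mem_filter => /andP[hj _]; by rewrite -codomE.
have allin : forall j, j \in s.
  move=> j; rewrite mem_cat; case: (boolP (j \in map _ _)) => //= h.
  by rewrite mem_filter mem_enum andbT; move: h; rewrite codomE.
have sz : size s = N.
  rewrite (perm_size (uniq_perm us (enum_uniq 'I_N) _)) ?size_enum_ord //.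
  by move=> j; rewrite allin mem_enum.
pose f : 'I_N -> 'I_N := fun j => nth j s j.
have finj : injective f.
  move=> j1 j2 e; apply/val_inj/eqP.
  rewrite -(nth_uniq j1 _ _ us) ?sz ?ltn_ord //.
  rewrite /f in e; rewrite e; apply/eqP/set_nth_default; by rewrite sz.
exists (perm finj) => i.
rewrite permE /f nth_cat size_map size_enum_ord /= ltn_ord.
rewrite (set_nth_default (sg i)) ?size_map ?size_enum_ord //.
rewrite (nth_map i) ?size_enum_ord // nth_ord_enum.
  by []. by rewrite -enumT size_enum_ord.
Qed.
Lemma bnd_integrable d (O : measurableType d) (R : realType) (P : probability O R)
  (h : O -> R) : measurable_fun setT h -> (exists M : R, forall x, `|h x| <= M) ->
  P.-integrable setT (EFin \o h).
Proof.
move=> mh [M hM]; apply: measurable_bounded_integrable => //.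
  by apply: (le_lt_trans (probability_le1 P measurableT)); rewrite ltry.
exists M; split; first by rewrite num_real.
move=> z Mz x _; exact: le_trans (hM x) (ltW Mz).
Qed.

Lemma transfer d1 d2 dT (O1 : measurableType d1) (O2 : measurableType d2)
  (T : measurableType dT) (R : realType) (P1 : probability O1 R)
  (P2 : probability O2 R) (f1 : O1 -> T) (f2 : O2 -> T) (g : T -> R) :
  measurable_fun setT f1 -> measurable_fun setT f2 -> measurable_fun setT g ->
  (exists M : R, forall x, `|g x| <= M) ->
  (forall A, measurable A -> P1 (f1 @^-1` A) = P2 (f2 @^-1` A)) ->
  (\int[P1]_w (g (f1 w))%:E = \int[P2]_w (g (f2 w))%:E)%E.
Proof.
move=> mf1 mf2 mg [M hM] eqP.
have mEg : measurable_fun [set: T] (EFin \o g) by exact/measurable_EFinP.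
have int1 : P1.-integrable (f1 @^-1` setT) ((EFin \o g) \o f1).
  rewrite preimage_setT; apply: bnd_integrable; last by exists M => x; exact: hM.
  exact: measurableT_comp.
have int2 : P2.-integrable (f2 @^-1` setT) ((EFin \o g) \o f2).
  rewrite preimage_setT; apply: bnd_integrable; last by exists M => x; exact: hM.
  exact: measurableT_comp.
have e1 := integral_pushforward mf1 mEg int1 measurableT.
have e2 := integral_pushforward mf2 mEg int2 measurableT.
rewrite preimage_setT in e1 e2.
rewrite -[LHS]/(\int[P1]_(x in setT) ((EFin \o g) \o f1) x)%E -e1.
rewrite -[RHS]/(\int[P2]_(x in setT) ((EFin \o g) \o f2) x)%E -e2.
apply: eq_measure_integral => A mA _; exact: eqP.
Qed.

Theorem lemma7 (d dS : measure_display) (Omega : measurableType d)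
  (R : realType) (S : measurableType dS) (P : probability Omega R)
  (n N : nat) (hnN : (n <= N)%N) (X : Omega -> n.-tuple S) :
  measurable_fun setT X ->
  exchangeable P X ->
  extendible hnN P X ->
  E_norm N P X = 1%E.
Proof.
move=> mX exX [d1 [Om1 [Q [Y [mY [exY lawY]]]]]].
pose ysg (sg : {ffun 'I_n -> 'I_N}) (y : N.-tuple S) : n.-tuple S :=
  [tuple tnth y (sg i) | i < n].
have mys sg : measurable_fun setT (ysg sg).
  apply/measurable_fun_tnthP => i.
  have -> : ((fun y => tnth y i) \o ysg sg) = (fun y => tnth y (sg i)).
    by apply/funext => y; rewrite /= tnth_mktuple.
  exact: measurable_tnth.
have mtf : measurable_fun setT (tfirst (S:=S) hnN).
  apply/measurable_fun_tnthP => i.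
  have -> : ((fun y => tnth y i) \o tfirst (S:=S) hnN) = (fun y => tnth y (widen_ord hnN i)).
    by apply/funext => y; rewrite /= tnth_mktuple.
  exact: measurable_tnth.
have law (sg : {ffun 'I_n -> 'I_N}) : injectiveb sg -> forall A : set (n.-tuple S), measurable A ->
    Q ((ysg sg \o Y) @^-1` A) = P (X @^-1` A).
  move=> /injectiveP sginj A mA.
  have [s hs] := ext_perm hnN sginj.
  have ht y : ysg sg y = tfirst hnN (tperm_coord s y).
    by apply: eq_from_tnth => i; rewrite /tfirst /tperm_coord !tnth_mktuple hs.
  rewrite (_ : ysg sg \o Y = tfirst hnN \o (fun w => tperm_coord s (Y w))); last first.
    by apply/funext => w; rewrite /= ht.
  have mA' : measurable (tfirst hnN @^-1` A).
    by rewrite -[X in measurable X]setTI; exact: mtf.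
  rewrite comp_preimage exY // -comp_preimage; exact: lawY.
pose K := (N ^_ n)%N.
have K0 : (K%:R : R) != 0 by rewrite pnatr_eq0 -lt0n /K ffact_gt0.
have cardK : #|[set sg : {ffun 'I_n -> 'I_N} | injectiveb sg]%SET| = K.
  have h := card_inj_ffuns 'I_n 'I_N; rewrite !card_ord in h; exact: h.
have sumc (V : nmodType) (c : V) :
    \sum_(sg : {ffun 'I_n -> 'I_N} | injectiveb sg) c = c *+ K.
  rewrite (eq_bigl (fun sg => sg \in [set sg : {ffun 'I_n -> 'I_N} | injectiveb sg]%SET)); last first.
    by move=> sg; rewrite inE.
  by rewrite sumr_const cardK.
have key (g : n.-tuple S -> R) : measurable_fun setT g -> (exists M : R, forall x, `|g x| <= M) ->
    (\int[P]_w (g (X w))%:E = \int[Q]_w (U_op g (Y w))%:E)%E.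
  move=> mg bg.
  have intf sg : Q.-integrable setT (fun w => (g (ysg sg (Y w)))%:E).
    apply: (@bnd_integrable _ _ _ _ (fun w => g (ysg sg (Y w)))); last first.
      by case: bg => M hM; exists M => x; exact: hM.
    apply: measurableT_comp => //; exact: measurableT_comp.
  have hU : (fun w => (U_op g (Y w))%:E) = (fun w =>
      ((K%:R)^-1)%:E * \sum_(sg : {ffun 'I_n -> 'I_N} | injectiveb sg)
        (g (ysg sg (Y w)))%:E)%E.
    by apply/funext => w; rewrite /U_op sumEFin -EFinM mulrC.
  rewrite hU integralZl //; last exact: integrable_sum.
  rewrite integral_sum //.
  rewrite (eq_bigr (fun _ => \int[P]_w (g (X w))%:E)%E); last first.
    move=> sg hsg; apply: esym; apply: transfer => //.
    - exact: measurableT_comp.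
    - by move=> A mA; rewrite (law sg hsg A mA).
  rewrite sumc.
  have : P.-integrable setT (fun w => (g (X w))%:E).
    apply: (@bnd_integrable _ _ _ _ (fun w => g (X w))); last first.
      by case: bg => M hM; exists M => x; exact: hM.
    exact: measurableT_comp.
  move=> /(integrable_fin_num measurableT).
  set I := (\int[P]_w _)%E; move: I => [r _| |] //.
  have -> : (r%:E *+ K)%R = (r *+ K)%:E. by elim: (K) => // k ih; rewrite !mulrS EFinD ih.
  by rewrite -EFinM mulrC -(mulr_natr r K) mulfK.
apply: le_anti; apply/andP; split.
  apply: ge_ereal_sup => _ [g [mg [bg Ug]] <-].
  rewrite key //.
  have hm : measurable_fun setT (fun w => (U_op g (Y w))%:E).
    apply/measurable_EFinP; apply: measurableT_comp mY.
    rewrite (_ : U_op g = (fun x => \sum_(sg : {ffun 'I_n -> 'I_N})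
        (if injectiveb sg then g (ysg sg x) else 0)) \* cst (K%:R^-1)); last first.
      by apply/funext => x; rewrite /U_op big_mkcond.
    apply: measurable_funM => //; apply: measurable_sum => sg.
    case: (injectiveb sg); last exact: measurable_cst.
    exact: measurableT_comp.
  apply: le_trans (le_abse_integral _ measurableT hm) _.
  apply: le_trans (integral_le_bound 1%E measurableT hm _ _) _ => //.
    by apply: aeW => w _; rewrite /= lee_fin Ug.
  by rewrite mul1e; apply: probability_le1.
apply: ereal_sup_ubound; exists (fun _ => 1).
  split; first exact: measurable_cst.
  split; first by exists 1 => x; rewrite normr1.
  by move=> x; rewrite /U_op sumc (mulfV K0) normr1.
rewrite integral_cst // mul1e.
match goal with |- (`| ?x | = _)%E => have -> : x = 1%E by exact: (probability_setT P) end.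
by rewrite abse1.
Qed.
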